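(* Let $h\in\mathbb N$ and let $W:\mathbb Z\to\mathbb R$ be the even function given for $a\ge0$ by $W(a)=2h-3a$ if $0\le a\le h$, $W(a)=a-2h$ if $h\le a\le 2h$, and $W(a)=0$ if $a>2h$. Then for all $q\in\mathbb N$, $\beta\in\mathbb R\setminus\mathbb Z$, $\ell\in\mathbb N$, $\alpha\in\mathbb R$: $$\sum_{\substack{a\in\mathbb Z\\ a\equiv0\ (\mathrm{mod}\ q)}}W(a)=2q\left\|\frac hq\right\|,\qquad \sum_{|a|\le 2h}W(a)e(a\beta)=\frac{4\sin^4(\pi h\beta)}{\sin^2(\pi\beta)},\qquad \sum_{b\in\mathbb Z}W(\ell b)e(b\alpha)\ge0.$$ Moreover, writing $E_X(\beta)=\sum_{a\in\mathbb Z,\,|a|\le X}e(a\beta)$, $$\frac1\ell\sum_{a\in\mathbb Z}W(a\ell)e(a\beta)=\frac{4\sin^2\bigl(\pi\beta\lfloor h/\ell\rfloor\bigr)-\sin^2\bigl(\pi\beta\lfloor 2h/\ell\rfloor\bigr)}{\sin^2(\pi\beta)}+4\left\{\frac h\ell\right\}E_{h/\ell}(\beta)-\left\{\frac{2h}\ell\right\}E_{2h/\ell}(\beta)$$ $$=2\Bigl(1-\cos\bigl(2\pi\beta\lfloor h/\ell\rfloor\bigr)\Bigr)\sum_{|a|\le h/\ell}\Bigl(\lfloor h/\ell\rfloor-|a|\Bigr)e(a\beta)-\left(2\left\{\frac h\ell\right\}-\left\{\frac{2h}\ell\right\}\right)E_{2\lfloor h/\ell\rfloor}(\beta)+4\left\{\frac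 h\ell\right\}E_{h/\ell}(\beta)-\left\{\frac{2h}\ell\right\}E_{2h/\ell}(\beta).$$
   Context: $e(\theta)=e^{2\pi i\theta}$; $\|r\|=\min_{n\in\mathbb Z}|r-n|$ is the distance to the nearest integer; $\lfloor\cdot\rfloor$ and $\{\cdot\}$ denote integer and fractional parts. *)

(* Defs.v *)
From Stdlib Require Import Reals ZArith Lra.
From Coquelicot Require Import Coquelicot.
Open Scope R_scope.

Definition e (t : R) : C := (cos (2 * PI * t), sin (2 * PI * t)).

Definition floorR (r : R) : Z := Int_part r.
Definition fracR (r : R) : R := r - IZR (floorR r).
Definition nidist (r : R) : R := Rmin (fracR r) (1 - fracR r).

(* sum of f a over the integers a with |a| <= N *)
Definition zsum (f : Z -> C) (N : nat) : C :=
  sum_n_m (fun k : nat => f (Z.of_nat k - Z.of_nat N)%Z) 0 (2 * N).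

Definition W (h : nat) (a : Z) : R :=
  let b := Z.abs a in
  let hz := Z.of_nat h in
  if (b <=? hz)%Z then IZR (2 * hz - 3 * b)
  else if (b <=? 2 * hz)%Z then IZR (b - 2 * hz)
  else 0.

(* E_X(beta) = sum_{|a| <= X} e(a beta), for X >= 0 *)
Definition EX (X beta : R) : C :=
  zsum (fun a => e (IZR a * beta)) (Z.to_nat (floorR X)).

(* Main.v *)
Require Import Defs.
From Stdlib Require Import Reals ZArith Lra Lia.
From Coquelicot Require Import Coquelicot.
Open Scope R_scope.

Lemma zsum_S (f : Z -> C) (N : nat) :
  zsum f (S N) = Cplus (Cplus (zsum f N) (f (Z.of_nat (S N)))) (f (- Z.of_nat (S N))%Z).
Proof.
  unfold zsum.
  replace (2 * S N)%nat with (S (S (2 * N))) by lia.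
  rewrite sum_Sn_m; [|lia].
  rewrite <- sum_n_m_S.
  rewrite sum_n_Sm; [|lia].
  rewrite (sum_n_m_ext_loc _ (fun k => f (Z.of_nat k - Z.of_nat N)%Z)).
  2:{ intros k _. f_equal. lia. }
  replace (Z.of_nat 0 - Z.of_nat (S N))%Z with (- Z.of_nat (S N))%Z by lia.
  replace (Z.of_nat (S (S (2 * N))) - Z.of_nat (S N))%Z with (Z.of_nat (S N)) by lia.
  change plus with Cplus.
  destruct (sum_n_m (fun k : nat => f (Z.of_nat k - Z.of_nat N)%Z) 0 (2 * N)) as [x y].
  destruct (f (Z.of_nat (S N))) as [u v]. destruct (f (- Z.of_nat (S N))%Z) as [s t].
  unfold Cplus; simpl. f_equal; lra.
Qed.

Lemma zsum_0 (f : Z -> C) : zsum f 0 = f 0%Z.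
Proof. unfold zsum. simpl. rewrite sum_n_n. reflexivity. Qed.

Definition cc (b : R) (k : nat) : R := cos (2 * PI * (INR k * b)).

Fixpoint csum (w : nat -> R) (b : R) (N : nat) : R :=
  match N with
  | O => w O
  | S n => csum w b n + 2 * w (S n) * cc b (S n)
  end.

Lemma zsum_csum (f : Z -> C) (v : nat -> R) (b : R) :
  (forall a, f a = Cmult (RtoC (v (Z.abs_nat a))) (e (IZR a * b))) ->
  forall N, zsum f N = RtoC (csum v b N).
Proof.
  intros Hf. induction N as [|N IH].
  - rewrite zsum_0, Hf. simpl. unfold e, RtoC, Cmult. simpl.
    rewrite Rmult_0_l, Rmult_0_r, cos_0, sin_0. f_equal; ring.
  - rewrite zsum_S, IH, !Hf.
    replace (Z.abs_nat (Z.of_nat (S N))) with (S N) by lia.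
    replace (Z.abs_nat (- Z.of_nat (S N))) with (S N) by lia.
    rewrite opp_IZR, <- INR_IZR_INZ. simpl csum. unfold cc, e, RtoC, Cmult, Cplus.
    set (x := INR (S N)). cbn [fst snd].
    replace (2 * PI * (- x * b)) with (- (2 * PI * (x * b))) by ring.
    rewrite cos_neg, sin_neg. f_equal; ring.
Qed.
Lemma csum_ext w1 w2 b N : (forall k, (k <= N)%nat -> w1 k = w2 k) -> csum w1 b N = csum w2 b N.
Proof.
  induction N as [|N IH]; intros H; simpl.
  - apply H; lia.
  - rewrite IH by (intros; apply H; lia). rewrite H by lia. reflexivity.
Qed.

Lemma csum_lin w1 w2 x y b N :
  csum (fun k => x * w1 k + y * w2 k) b N = x * csum w1 b N + y * csum w2 b N.
Proof. induction N as [|N IH]; simpl; [ring| rewrite IH; ring]. Qed.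

Lemma csum_tail w b N : (forall k, (N < k)%nat -> w k = 0) ->
  forall j, csum w b (N + j) = csum w b N.
Proof.
  intros H j. induction j as [|j IH].
  - rewrite Nat.add_0_r; reflexivity.
  - rewrite Nat.add_succ_r. simpl. rewrite IH, H by lia. ring.
Qed.

Definition EE b n := csum (fun _ => 1) b n.
Definition TT b n := csum (fun k => INR n - INR k) b n.

Lemma TT_S b n : TT b (S n) = TT b n + EE b n.
Proof.
  unfold TT, EE. cbn [csum]. rewrite Rminus_diag, Rmult_0_r, Rmult_0_l, Rplus_0_r.
  rewrite <- (Rmult_1_l (csum (fun k => INR n - INR k) b n)),
          <- (Rmult_1_l (csum (fun _ => 1) b n)), <- csum_lin.
  apply csum_ext. intros k _. rewrite S_INR. ring.
Qed.

Lemma cc_0 b : cc b 0 = 1.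
Proof. unfold cc. simpl. rewrite Rmult_0_l, Rmult_0_r. apply cos_0. Qed.

Lemma cc_rec b k : cc b (S (S k)) + cc b k = 2 * cc b (S k) * cc b 1.
Proof.
  unfold cc. replace (INR (S (S k))) with (INR k + 1 + 1) by (rewrite !S_INR; ring).
  replace (INR (S k)) with (INR k + 1) by (rewrite !S_INR; ring).
  replace (INR 1) with 1 by reflexivity.
  set (u := 2 * PI * ((INR k + 1) * b)). set (t := 2 * PI * (1 * b)).
  replace (2 * PI * ((INR k + 1 + 1) * b)) with (u + t) by (unfold u, t; ring).
  replace (2 * PI * (INR k * b)) with (u - t) by (unfold u, t; ring).
  rewrite cos_plus, cos_minus. ring.
Qed.

Lemma EE_rec b n : EE b n * (1 - cc b 1) = cc b n - cc b (S n).
Proof.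
  induction n as [|n IH].
  - unfold EE. simpl. rewrite cc_0. ring.
  - unfold EE in *. cbn [csum]. rewrite Rmult_plus_distr_r, IH.
    pose proof (cc_rec b n). lra.
Qed.

Lemma TT_rec b n : TT b n * (1 - cc b 1) = 1 - cc b n.
Proof.
  induction n as [|n IH].
  - unfold TT. simpl. rewrite cc_0. ring.
  - rewrite TT_S, Rmult_plus_distr_r, IH, EE_rec. ring.
Qed.

Lemma cc_double b n : cc b (2 * n) = 2 * cc b n ^ 2 - 1.
Proof.
  unfold cc. rewrite mult_INR. simpl INR.
  replace (2 * PI * ((1 + 1) * INR n * b)) with (2 * (2 * PI * (INR n * b))) by ring.
  rewrite cos_2a_cos. ring.
Qed.

Lemma EE_zero n : EE 0 n = 2 * INR n + 1.
Proof.
  induction n as [|n IH]; unfold EE in *; cbn [csum].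
  - simpl; ring.
  - rewrite IH. unfold cc. rewrite Rmult_0_r, Rmult_0_r, cos_0, S_INR. ring.
Qed.

Lemma TT_zero n : TT 0 n = INR n ^ 2.
Proof.
  induction n as [|n IH].
  - unfold TT; simpl; ring.
  - rewrite TT_S, IH, EE_zero, S_INR. ring.
Qed.

Lemma lam b n f N : 0 <= f < 1 -> (n <= N)%nat ->
  csum (fun k => Rmax 0 (INR n + f - INR k)) b N = TT b n + f * EE b n.
Proof.
  intros Hf HN.
  replace N with (n + (N - n))%nat by lia.
  rewrite csum_tail.
  2:{ intros k Hk. assert (INR n + 1 <= INR k) by (rewrite <- S_INR; apply le_INR; lia).
      unfold Rmax; destruct Rle_dec; lra. }
  unfold TT, EE. rewrite <- (Rmult_1_l (csum (fun k => INR n - INR k) b n)), <- csum_lin.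
  apply csum_ext. intros k Hk. apply le_INR in Hk.
  unfold Rmax; destruct Rle_dec; lra.
Qed.

Lemma Rmax_scale l x : 0 < l -> Rmax 0 (l * x) = l * Rmax 0 x.
Proof.
  intros Hl. unfold Rmax. destruct (Rle_dec 0 (l*x)), (Rle_dec 0 x); try nra.
Qed.

Lemma W_val h z : W h z = 4 * Rmax 0 (INR h - INR (Z.abs_nat z)) - Rmax 0 (2 * INR h - INR (Z.abs_nat z)).
Proof.
  unfold W. rewrite INR_IZR_INZ, INR_IZR_INZ.
  replace (Z.of_nat (Z.abs_nat z)) with (Z.abs z) by lia.
  pose proof (Z.abs_nonneg z) as Hz. apply IZR_le in Hz.
  destruct (Z.leb_spec (Z.abs z) (Z.of_nat h)) as [H1|H1].
  - apply IZR_le in H1. rewrite minus_IZR, !mult_IZR.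
    unfold Rmax; destruct Rle_dec; destruct Rle_dec; simpl; lra.
  - apply IZR_lt in H1.
    destruct (Z.leb_spec (Z.abs z) (2 * Z.of_nat h)) as [H2|H2].
    + apply IZR_le in H2. rewrite mult_IZR in H2. rewrite minus_IZR, !mult_IZR.
      unfold Rmax; destruct Rle_dec; destruct Rle_dec; simpl in *; lra.
    + apply IZR_lt in H2. rewrite mult_IZR in H2.
      unfold Rmax; destruct Rle_dec; destruct Rle_dec; simpl in *; lra.
Qed.

Lemma Wsum h l b n f M f2 : (1 <= l)%nat ->
  INR h / INR l = INR n + f -> 2 * INR h / INR l = INR M + f2 ->
  0 <= f < 1 -> 0 <= f2 < 1 ->
  csum (fun k => W h (Z.of_nat (l * k))) b (2 * h)
  = INR l * (4 * (TT b n + f * EE b n) - (TT b M + f2 * EE b M)).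
Proof.
  intros Hl Hn HM Hf Hf2.
  assert (Hl' : 1 <= INR l) by (apply (le_INR 1); lia).
  assert (Hh : 0 <= INR h) by apply pos_INR.
  assert (Hq : INR h / INR l <= INR h).
  { unfold Rdiv. rewrite <- (Rmult_1_r (INR h)) at 2. apply Rmult_le_compat_l; auto.
    rewrite <- Rinv_1. apply Rinv_le_contravar; lra. }
  assert (HnN : (n <= 2 * h)%nat).
  { apply INR_le. rewrite mult_INR. simpl INR. lra. }
  assert (HMN : (M <= 2 * h)%nat).
  { apply INR_le. rewrite mult_INR. simpl INR.
    replace (2 * INR h / INR l) with (2 * (INR h / INR l)) in HM by (unfold Rdiv; ring). lra. }
  rewrite <- (lam b n f (2 * h)) by auto.
  rewrite <- (lam b M f2 (2 * h)) by auto.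
  replace (INR l * (4 * csum (fun k : nat => Rmax 0 (INR n + f - INR k)) b (2 * h) -
   csum (fun k : nat => Rmax 0 (INR M + f2 - INR k)) b (2 * h)))
   with ((INR l * 4) * csum (fun k : nat => Rmax 0 (INR n + f - INR k)) b (2 * h) +
   (- INR l) * csum (fun k : nat => Rmax 0 (INR M + f2 - INR k)) b (2 * h)) by ring.
  rewrite <- csum_lin. apply csum_ext. intros k _.
  rewrite W_val. replace (Z.abs_nat (Z.of_nat (l * k))) with (l * k)%nat by lia.
  rewrite <- Hn, <- HM, mult_INR.
  replace (INR h - INR l * INR k) with (INR l * (INR h / INR l - INR k)) by (field; lra).
  replace (2 * INR h - INR l * INR k) with (INR l * (2 * INR h / INR l - INR k)) by (field; lra).
  rewrite !Rmax_scale by lra. ring.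
Qed.

Lemma floor_unique z r : IZR z <= r < IZR z + 1 -> floorR r = z.
Proof.
  intros [H1 H2]. unfold floorR. destruct (base_Int_part r) as [H3 H4].
  assert (A : (Int_part r < z + 1)%Z) by (apply lt_IZR; rewrite plus_IZR; simpl; lra).
  assert (B : (z < Int_part r + 1)%Z) by (apply lt_IZR; rewrite plus_IZR; simpl; lra).
  lia.
Qed.

Lemma decomp r : 0 <= r ->
  INR (Z.to_nat (floorR r)) = IZR (floorR r) /\ r = INR (Z.to_nat (floorR r)) + fracR r
  /\ 0 <= fracR r < 1.
Proof.
  intros Hr. destruct (base_Int_part r) as [H3 H4].
  assert (Hz : (0 <= floorR r)%Z).
  { assert (A : (-1 < floorR r)%Z) by (apply lt_IZR; unfold floorR; simpl; lra). lia. }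
  assert (E : INR (Z.to_nat (floorR r)) = IZR (floorR r)).
  { rewrite INR_IZR_INZ, Z2Nat.id; auto. }
  unfold fracR, floorR in *. rewrite E. repeat split; lra.
Qed.

Lemma floor_double_lo r : 0 <= fracR r < 1/2 ->
  floorR (2 * r) = (2 * floorR r)%Z /\ fracR (2 * r) = 2 * fracR r.
Proof.
  intros Hf. unfold fracR in *.
  assert (E : floorR (2 * r) = (2 * floorR r)%Z).
  { apply floor_unique. rewrite mult_IZR. lra. }
  split; auto. rewrite E, mult_IZR. lra.
Qed.

Lemma floor_double_hi r : 1/2 <= fracR r < 1 ->
  floorR (2 * r) = (2 * floorR r + 1)%Z /\ fracR (2 * r) = 2 * fracR r - 1.
Proof.
  intros Hf. unfold fracR in *.
  assert (E : floorR (2 * r) = (2 * floorR r + 1)%Z).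
  { apply floor_unique. rewrite plus_IZR, mult_IZR. lra. }
  split; auto. rewrite E, plus_IZR, mult_IZR. lra.
Qed.

Lemma cc_all b : cc b 1 = 1 -> forall k, cc b k = 1.
Proof.
  intros H1.
  assert (Hs : sin (2 * PI * (INR 1 * b)) = 0).
  { pose proof (sin2_cos2 (2 * PI * (INR 1 * b))). unfold cc in H1. rewrite H1 in H.
    unfold Rsqr in H. nra. }
  assert (G : forall k, cos (2 * PI * (INR k * b)) = 1 /\ sin (2 * PI * (INR k * b)) = 0).
  { induction k as [|k [IH1 IH2]].
    - simpl. rewrite Rmult_0_l, Rmult_0_r. split; [apply cos_0|apply sin_0].
    - replace (2 * PI * (INR (S k) * b)) with (2 * PI * (INR k * b) + 2 * PI * (INR 1 * b))
        by (rewrite (S_INR k); change (INR 1) with 1; ring).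
      rewrite cos_plus, sin_plus, IH1, IH2, Hs. unfold cc in H1. rewrite H1. split; ring. }
  intros k. apply G.
Qed.

Lemma csum_triv w b N : cc b 1 = 1 -> csum w b N = csum w 0 N.
Proof.
  intros H. induction N as [|N IH]; simpl; auto.
  rewrite IH, (cc_all b) by auto. unfold cc. rewrite Rmult_0_r, Rmult_0_r, cos_0. ring.
Qed.

Lemma cc_le1 b k : cc b k <= 1.
Proof. unfold cc. apply COS_bound. Qed.

Lemma key4 b n : 4 * TT b n - TT b (2 * n) = 2 * (1 - cc b n) * TT b n.
Proof.
  destruct (Req_dec (cc b 1) 1) as [H|H].
  - unfold TT. rewrite !(csum_triv _ b) by auto. fold (TT 0 n) (TT 0 (2*n)).
    rewrite !TT_zero, cc_all, mult_INR by auto. simpl INR. ring.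
  - apply (Rmult_eq_reg_r (1 - cc b 1)); [|lra].
    replace ((4 * TT b n - TT b (2 * n)) * (1 - cc b 1))
      with (4 * (TT b n * (1 - cc b 1)) - TT b (2 * n) * (1 - cc b 1)) by ring.
    replace (2 * (1 - cc b n) * TT b n * (1 - cc b 1))
      with (2 * (1 - cc b n) * (TT b n * (1 - cc b 1))) by ring.
    rewrite !TT_rec, cc_double. ring.
Qed.

Lemma V0_pos b n : 0 <= 4 * TT b n - TT b (2 * n).
Proof.
  rewrite key4. destruct (Req_dec (cc b 1) 1) as [H|H].
  - rewrite cc_all by auto. lra.
  - pose proof (cc_le1 b 1). pose proof (TT_rec b n). pose proof (cc_le1 b n).
    assert (0 <= TT b n) by nra. nra.
Qed.

Lemma Vh_pos b n : 0 <= 4 * TT b n + 2 * EE b n - TT b (S (2 * n)).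
Proof.
  destruct (Req_dec (cc b 1) 1) as [H|H].
  - unfold TT, EE. rewrite !(csum_triv _ b) by auto.
    fold (TT 0 n) (TT 0 (S (2*n))) (EE 0 n).
    rewrite !TT_zero, EE_zero, S_INR, mult_INR. simpl INR. nra.
  - pose proof (cc_le1 b 1).
    assert (P : 0 <= (4 * TT b n + 2 * EE b n - TT b (S (2 * n))) * (1 - cc b 1)).
    { replace ((4 * TT b n + 2 * EE b n - TT b (S (2 * n))) * (1 - cc b 1))
        with (4 * (TT b n * (1 - cc b 1)) + 2 * (EE b n * (1 - cc b 1))
              - TT b (S (2 * n)) * (1 - cc b 1)) by ring.
      rewrite !TT_rec, EE_rec. unfold cc.
      set (X := PI * ((INR n + /2) * b) * 2). set (Y := PI * b).
      replace (2 * PI * (INR n * b)) with (X - Y) by (unfold X, Y; field).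
      replace (2 * PI * (INR (S n) * b)) with (X + Y) by (unfold X, Y; rewrite S_INR; field).
      replace (2 * PI * (INR (S (2 * n)) * b)) with (2 * X)
        by (unfold X, Y; rewrite S_INR, mult_INR; simpl INR; field).
      rewrite cos_plus, cos_minus, cos_2a_cos.
      pose proof (sin2_cos2 Y). pose proof (sin2_cos2 X). unfold Rsqr in *.
      nra. }
    nra.
Qed.

Lemma setup h L : (1 <= L)%nat ->
  exists n f M f2,
    INR n = IZR (floorR (INR h / INR L)) /\ Z.to_nat (floorR (INR h / INR L)) = n /\
    INR h / INR L = INR n + f /\ f = fracR (INR h / INR L) /\ 0 <= f < 1 /\
    Z.to_nat (floorR (2 * INR h / INR L)) = M /\ 2 * INR h / INR L = INR M + f2 /\
    f2 = fracR (2 * INR h / INR L) /\ 0 <= f2 < 1 /\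
    ((f < 1/2 /\ M = (2 * n)%nat /\ f2 = 2 * f) \/ (1/2 <= f /\ M = S (2 * n) /\ f2 = 2 * f - 1)).
Proof.
  intros HL.
  assert (HL' : 1 <= INR L) by (apply (le_INR 1); lia).
  set (r := INR h / INR L).
  assert (Hr : 0 <= r) by (unfold r; apply Rdiv_le_0_compat; [apply pos_INR|lra]).
  assert (E2 : 2 * INR h / INR L = 2 * r) by (unfold r, Rdiv; ring).
  destruct (decomp r Hr) as (A1 & A2 & A3).
  exists (Z.to_nat (floorR r)), (fracR r).
  rewrite E2.
  destruct (Rlt_or_le (fracR r) (1/2)) as [Hlo|Hhi].
  - destruct (floor_double_lo r) as [F1 F2]; [lra|].
    exists (2 * Z.to_nat (floorR r))%nat, (2 * fracR r).
    rewrite F1, F2. repeat split; auto; try lra.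
    + lia.
    + rewrite mult_INR. simpl INR. lra.
  - destruct (floor_double_hi r) as [F1 F2]; [lra|].
    exists (S (2 * Z.to_nat (floorR r)))%nat, (2 * fracR r - 1).
    rewrite F1, F2. repeat split; auto; try lra.
    + assert (0 <= floorR r)%Z by (apply le_IZR; rewrite <- A1; apply pos_INR). lia.
    + rewrite S_INR, mult_INR. simpl INR. lra.
Qed.

Lemma W_abs h z1 z2 : Z.abs_nat z1 = Z.abs_nat z2 -> W h z1 = W h z2.
Proof. intros H. rewrite !W_val, H. reflexivity. Qed.

Lemma V_pos b n f M f2 : 0 <= f < 1 ->
  ((f < 1/2 /\ M = (2 * n)%nat /\ f2 = 2 * f) \/ (1/2 <= f /\ M = S (2 * n) /\ f2 = 2 * f - 1)) ->
  0 <= 4 * (TT b n + f * EE b n) - (TT b M + f2 * EE b M).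
Proof.
  intros Hf [(H1 & -> & ->)|(H1 & -> & ->)].
  - pose proof (V0_pos b n). pose proof (Vh_pos b n). rewrite TT_S in *.
    assert (0 <= (1 - 2 * f) * (4 * TT b n - TT b (2 * n))) by (apply Rmult_le_pos; lra).
    assert (0 <= (2 * f) * (4 * TT b n + 2 * EE b n - (TT b (2 * n) + EE b (2 * n))))
      by (apply Rmult_le_pos; lra).
    nra.
  - pose proof (V0_pos b (S n)). pose proof (Vh_pos b n).
    replace (2 * S n)%nat with (S (S (2 * n))) in H by lia.
    rewrite (TT_S b n), (TT_S b (S (2 * n))) in H.
    assert (0 <= (2 * f - 1) * (4 * (TT b n + EE b n) - (TT b (S (2 * n)) + EE b (S (2 * n)))))
      by (apply Rmult_le_pos; lra).
    assert (0 <= (2 - 2 * f) * (4 * TT b n + 2 * EE b n - TT b (S (2 * n))))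
      by (apply Rmult_le_pos; lra).
    nra.
Qed.

Lemma EX_eq X b n : Z.to_nat (floorR X) = n -> EX X b = RtoC (EE b n).
Proof.
  intros H. unfold EX. rewrite H. apply zsum_csum.
  intros a. unfold RtoC, Cmult. destruct (e (IZR a * b)) as [u v]. simpl. f_equal; ring.
Qed.

Lemma sin_sq b k : sin (PI * b * INR k) ^ 2 = (1 - cc b k) / 2.
Proof.
  unfold cc. replace (2 * PI * (INR k * b)) with (2 * (PI * b * INR k)) by ring.
  rewrite cos_2a_sin. field.
Qed.

Lemma sin_ne0 b : ~ (exists z : Z, b = IZR z) -> 1 - cc b 1 <> 0.
Proof.
  intros Hb H. apply Hb.
  assert (sin (PI * b * INR 1) ^ 2 = 0) by (rewrite sin_sq; lra).
  assert (sin (PI * b * INR 1) = 0) by nra.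
  destruct (sin_eq_0_0 _ H1) as [k Hk]. exists k.
  change (INR 1) with 1 in Hk. pose proof PI_RGT_0.
  apply (Rmult_eq_reg_r PI); lra.
Qed.

Lemma C_eq (x y : C) : fst x = fst y -> snd x = snd y -> x = y.
Proof. destruct x, y; simpl; intros -> ->; reflexivity. Qed.

Theorem lemma4 (h : nat) :
  forall (q : nat) (beta : R) (l : nat) (alpha : R),
    (1 <= q)%nat ->
    ~ (exists z : Z, beta = IZR z) ->
    (1 <= l)%nat ->
    zsum (fun k => RtoC (W h (Z.of_nat q * k)%Z)) (2 * h)
      = RtoC (2 * INR q * nidist (INR h / INR q))
    /\
    zsum (fun a => Cmult (RtoC (W h a)) (e (IZR a * beta))) (2 * h)
      = RtoC (4 * sin (PI * INR h * beta) ^ 4 / sin (PI * beta) ^ 2)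
    /\
    (let S := zsum (fun b => Cmult (RtoC (W h (Z.of_nat l * b)%Z)) (e (IZR b * alpha)))
                   (2 * h) in
     Im S = 0 /\ 0 <= Re S)
    /\
    (let m := IZR (floorR (INR h / INR l)) in
     let M := IZR (floorR (2 * INR h / INR l)) in
     let f1 := fracR (INR h / INR l) in
     let f2 := fracR (2 * INR h / INR l) in
     let LHS := Cmult (RtoC (/ INR l))
                  (zsum (fun a => Cmult (RtoC (W h (a * Z.of_nat l)%Z)) (e (IZR a * beta)))
                        (2 * h)) in
     let tail := Cminus (Cmult (RtoC (4 * f1)) (EX (INR h / INR l) beta))
                        (Cmult (RtoC f2) (EX (2 * INR h / INR l) beta)) in
     LHS = Cplus (RtoC ((4 * sin (PI * beta * m) ^ 2 - sin (PI * beta * M) ^ 2)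
                         / sin (PI * beta) ^ 2)) tail
     /\
     LHS = Cplus
             (Cminus
               (Cmult (RtoC (2 * (1 - cos (2 * PI * beta * m))))
                  (zsum (fun a => Cmult (RtoC (m - IZR (Z.abs a))) (e (IZR a * beta)))
                        (Z.to_nat (floorR (INR h / INR l)))))
               (Cmult (RtoC (2 * f1 - f2)) (EX (2 * m) beta)))
             tail).
Proof.
  intros q beta l alpha Hq Hb Hl.
  split; [|split; [|split]].
  -
    destruct (setup h q Hq) as (n & f & M & f2 & A1 & A2 & A3 & A4 & A5 & A6 & A7 & A8 & A9 & A10).
    rewrite (zsum_csum _ (fun k => W h (Z.of_nat (q * k))) 0).
    2:{ intros a. unfold e. rewrite Rmult_0_r, Rmult_0_r, cos_0, sin_0.
        rewrite (W_abs h (Z.of_nat q * a) (Z.of_nat (q * Z.abs_nat a))) by lia.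
        unfold RtoC, Cmult. simpl. f_equal; ring. }
    rewrite (Wsum h q 0 n f M f2) by auto.
    rewrite !TT_zero, !EE_zero. unfold nidist. rewrite <- A4.
    f_equal. unfold Rmin. destruct A10 as [(B1 & -> & ->)|(B1 & -> & ->)];
      rewrite ?S_INR, mult_INR; simpl INR; destruct Rle_dec;
      first [ring | (exfalso; lra) | (assert (Hf: f = 1/2) by lra; rewrite Hf; field)].
  -
    assert (H1 : (1 <= 1)%nat) by lia.
    rewrite (zsum_csum (fun a => Cmult (RtoC (W h a)) (e (IZR a * beta))) (fun k => W h (Z.of_nat (1 * k))) beta).
    2:{ intros a. rewrite (W_abs h a (Z.of_nat (1 * Z.abs_nat a))) by lia. reflexivity. }
    rewrite (Wsum h 1 beta h 0 (2 * h) 0 H1).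
    2:{ simpl INR. field. } 2:{ rewrite mult_INR. simpl INR. field. } 2,3: lra.
    f_equal. pose proof (sin_ne0 beta Hb) as Hc.
    pose proof (key4 beta h) as K. pose proof (TT_rec beta h) as T.
    replace (PI * INR h * beta) with (PI * beta * INR h) by ring.
    replace (sin (PI * beta * INR h) ^ 4) with ((sin (PI * beta * INR h) ^ 2) ^ 2) by ring.
    rewrite sin_sq.
    replace (PI * beta) with (PI * beta * INR 1) by (simpl; ring).
    rewrite sin_sq.
    assert (HT2 : TT beta (2 * h) = 4 * TT beta h - 2 * (1 - cc beta h) * TT beta h) by lra.
    assert (Ht : TT beta h = (1 - cc beta h) / (1 - cc beta 1)) by (field_simplify_eq; auto; lra).
    rewrite HT2, Ht. simpl INR. field. auto.
  -
    cbv zeta.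
    destruct (setup h l Hl) as (n & f & M & f2 & A1 & A2 & A3 & A4 & A5 & A6 & A7 & A8 & A9 & A10).
    rewrite (zsum_csum (fun b => Cmult (RtoC (W h (Z.of_nat l * b)%Z)) (e (IZR b * alpha))) (fun k => W h (Z.of_nat (l * k))) alpha).
    2:{ intros a. rewrite (W_abs h (Z.of_nat l * a) (Z.of_nat (l * Z.abs_nat a))) by lia. reflexivity. }
    rewrite (Wsum h l alpha n f M f2) by auto.
    simpl. split; [reflexivity|].
    apply Rmult_le_pos; [apply pos_INR|]. apply V_pos; auto.
  - cbv zeta.
    destruct (setup h l Hl) as (n & f & M & f2 & A1 & A2 & A3 & A4 & A5 & A6 & A7 & A8 & A9 & A10).
    assert (Hl' : 1 <= INR l) by (apply (le_INR 1); lia).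
    rewrite (zsum_csum (fun a => Cmult (RtoC (W h (a * Z.of_nat l)%Z)) (e (IZR a * beta))) (fun k => W h (Z.of_nat (l * k))) beta).
    2:{ intros a. rewrite (W_abs h (a * Z.of_nat l) (Z.of_nat (l * Z.abs_nat a))) by lia. reflexivity. }
    rewrite (Wsum h l beta n f M f2) by auto.
    rewrite (EX_eq _ beta n A2), (EX_eq _ beta M A6).
    rewrite (EX_eq (2 * IZR (floorR (INR h / INR l))) beta (2 * n)).
    2:{ rewrite (floor_unique (2 * floorR (INR h / INR l))); [lia|]. rewrite mult_IZR. lra. }
    rewrite (zsum_csum (fun a => Cmult (RtoC (IZR (floorR (INR h / INR l)) - IZR (Z.abs a))) (e (IZR a * beta))) (fun k => INR n - INR k) beta).
    2:{ intros a. rewrite <- A1. rewrite (INR_IZR_INZ (Z.abs_nat a)), Zabs2Nat.id_abs. reflexivity. }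
    rewrite A2. fold (TT beta n).
    rewrite <- A1, <- A4, <- A8.
    replace (IZR (floorR (2 * INR h / INR l))) with (INR M)
      by (rewrite <- A6, INR_IZR_INZ, Z2Nat.id; auto;
          apply le_IZR; apply (Rle_trans _ (INR M)); [apply pos_INR|];
          rewrite <- A6, INR_IZR_INZ, Z2Nat.id; [lra|];
          destruct (base_Int_part (2 * INR h / INR l)) as [B1 B2];
          assert (Hp : 0 <= 2 * INR h / INR l) by (apply Rdiv_le_0_compat; [pose proof (pos_INR h); lra|lra]);
          assert (-1 < floorR (2 * INR h / INR l))%Z by (apply lt_IZR; unfold floorR; simpl; lra); lia).
    pose proof (sin_ne0 beta Hb) as Hc.
    pose proof (TT_rec beta n) as Tn. pose proof (TT_rec beta M) as TM.
    pose proof (key4 beta n) as K.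
    replace (cos (2 * PI * beta * INR n)) with (cc beta n) by (unfold cc; f_equal; ring).
    rewrite (sin_sq beta n), (sin_sq beta M).
    replace (sin (PI * beta) ^ 2) with ((1 - cc beta 1) / 2)
      by (rewrite <- sin_sq; simpl INR; rewrite Rmult_1_r; reflexivity).
    split; apply C_eq; simpl; try ring.
    + field_simplify_eq; [|lra].
      apply (Rmult_eq_reg_r (1 - cc beta 1)); [|auto].
      replace (cc beta M) with (1 - TT beta M * (1 - cc beta 1)) by lra.
      replace (cc beta n) with (1 - TT beta n * (1 - cc beta 1)) by lra.
      field. auto.
    + rewrite <- Rmult_assoc, Rinv_l, Rmult_1_l by lra.
      replace (n + (n + 0))%nat with (2 * n)%nat by lia.
      destruct A10 as [(B1 & -> & ->)|(B1 & -> & ->)].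
      * lra.
      * rewrite TT_S. lra.
Qed.
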